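(* Let $\theta\geq 0$ be real. If $p$ is a projector over $A(\mathbb{R}^2_\theta)$, i.e. $p\in M_n(A(\mathbb{R}^2_\theta))$ for some $n$ with $p^2=p=p^*$, then every entry of $p$ is a scalar multiple of the identity, i.e. $p$ is a projector in $M_n(\mathbb{C})$.
   Context: $A(\mathbb{R}^2_\theta)$ is the unital $*$-algebra generated by two self-adjoint elements $x,y$ with $[x,y]=xy-yx=-i\theta$; every element can be written uniquely as a finite sum $\sum a_{p,q}x^py^q$ with $a_{p,q}\in\mathbb{C}$ (ordered monomials linearly independent), and $\mathbb{C}$ is identified with the scalar multiples of $1$. *)

(* Defs.v *)
From HB Require Import structures.
From mathcomp Require Import all_boot all_order all_algebra.
From mathcomp Require Import reals.
From mathcomp Require Import complex.
Set Implicit Arguments. Unset Strict Implicit. Unset Printing Implicit Defensive.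
Import Order.TTheory GRing.Theory Num.Theory.
Local Open Scope ring_scope.

Definition itheta (R : rcfType) (theta : R) : R[i] := Complex 0 theta.

(* [Atheta star x y theta] : the C-algebra A (unital, with involution [star])
   is A(R^2_theta): a unital *-algebra generated by self-adjoint x, y with
   [x,y] = xy - yx = -i theta, in which the ordered monomials x^p y^q form
   a basis (linearly independent and spanning).  This determines A up to
   *-isomorphism. *)
Record Atheta (R : rcfType) (A : algType R[i]) (star : A -> A) (x y : A)
    (theta : R) : Prop := {
  star_add : forall a b : A, star (a + b) = star a + star b;
  star_scale : forall (c : R[i]) (a : A), star (c *: a) = c^* *: star a;
  star_mul : forall a b : A, star (a * b) = star b * star a;
  star_invol : forall a : A, star (star a) = a;
  star_x : star x = x;
  star_y : star y = y;
  commutator_xy : x * y - y * x = (- itheta theta)%:A;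
  monomials_free : forall (N : nat) (a : 'I_N -> 'I_N -> R[i]),
    \sum_(p < N) \sum_(q < N) a p q *: (x ^+ p * y ^+ q) = 0 ->
    forall p q, a p q = 0;
  monomials_span : forall z : A, exists (N : nat) (a : 'I_N -> 'I_N -> R[i]),
    z = \sum_(p < N) \sum_(q < N) a p q *: (x ^+ p * y ^+ q)
}.

Definition mx_star (T : Type) (star : T -> T) (n : nat) (M : 'M[T]_n) : 'M[T]_n :=
  \matrix_(i < n, j < n) star (M j i).

(* Main.v *)
Require Import Defs.
From HB Require Import structures.
From mathcomp Require Import all_boot all_order all_algebra.
From mathcomp Require Import reals.
From mathcomp Require Import complex.
From mathcomp Require Import zify.
From Stdlib Require Import Lia.
Import Order.TTheory GRing.Theory Num.Theory.
Local Open Scope ring_scope.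

Section Weyl.
Variable R : realType.
Variable A : algType R[i].
Variables (star : A -> A) (x y : A) (theta : R).
Hypothesis HA : Atheta star x y theta.

Definition mon (i j : nat) : A := x ^+ i * y ^+ j.

Inductive Comb (S : nat -> nat -> bool) : A -> Prop :=
| Comb0 : Comb S 0
| CombM i j (c : R[i]) : S i j -> Comb S (c *: mon i j)
| CombD u v : Comb S u -> Comb S v -> Comb S (u + v).

Lemma Comb_mono (S S' : nat -> nat -> bool) u : (forall i j, S i j -> S' i j) -> Comb S u -> Comb S' u.
Proof.
move=> HS; elim => [|i j c Hij|u1 v1 _ H1 _ H2]; first exact: Comb0.
  exact: CombM (HS _ _ Hij).
exact: CombD.
Qed.

Lemma Comb_map (S S' : nat -> nat -> bool) (f : A -> A) u :
  f 0 = 0 -> (forall a b, f (a + b) = f a + f b) ->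
  (forall i j c, S i j -> Comb S' (f (c *: mon i j))) ->
  Comb S u -> Comb S' (f u).
Proof.
move=> f0 fD Hm; elim => [|i j c Hij|u1 v1 _ H1 _ H2].
- rewrite f0; exact: Comb0.
- exact: Hm.
- rewrite fD; exact: CombD.
Qed.

Lemma Comb_scale (S : nat -> nat -> bool) c u : Comb S u -> Comb S (c *: u).
Proof.
move=> H; apply: (@Comb_map S S (fun z => c *: z)) H.
- by rewrite scaler0.
- by move=> a b; rewrite scalerDr.
- by move=> i j d Hij; rewrite scalerA; apply: CombM.
Qed.

Lemma Comb_opp (S : nat -> nat -> bool) u : Comb S u -> Comb S (- u).
Proof. by move=> H; rewrite -scaleN1r; apply: Comb_scale. Qed.

Lemma Comb_sub (S : nat -> nat -> bool) u v : Comb S u -> Comb S v -> Comb S (u - v).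
Proof. by move=> Hu Hv; apply: CombD => //; apply: Comb_opp. Qed.

Lemma Comb_sum (S : nat -> nat -> bool) (I : finType) (F : I -> A) :
  (forall k, Comb S (F k)) -> Comb S (\sum_k F k).
Proof.
move=> H; apply: (big_ind (Comb S)) => //; first exact: Comb0.
exact: CombD.
Qed.

Definition ev (N : nat) (a : nat -> nat -> R[i]) : A :=
  \sum_(i < N) \sum_(j < N) a i j *: mon i j.

Lemma free_ev N a : ev N a = 0 -> forall i j, (i < N)%N -> (j < N)%N -> a i j = 0.
Proof.
move=> H i j Hi Hj.
have := @monomials_free _ _ _ _ _ _ HA N (fun p q : 'I_N => a p q) H (Ordinal Hi) (Ordinal Hj).
by [].
Qed.

Lemma sum_widen (F : nat -> A) N M : (N <= M)%N ->
  (forall i, (N <= i)%N -> F i = 0) -> \sum_(i < M) F i = \sum_(i < N) F i.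
Proof.
move=> NM HF; rewrite [RHS](big_ord_widen M F NM) [RHS]big_mkcond /=.
apply: eq_bigr => i _; case: ifP => // /negbT; rewrite -leqNgt => /HF ->.
by [].
Qed.

Lemma ev_widen N M a : (N <= M)%N ->
  (forall i j, a i j != 0 -> (i < N)%N && (j < N)%N) -> ev M a = ev N a.
Proof.
move=> NM Ha; rewrite /ev (@sum_widen (fun i => \sum_(j < M) a i j *: mon i j) N M NM).
  apply: eq_bigr => i _; rewrite (@sum_widen (fun j => a i j *: mon i j) N M NM) //.
  move=> j Hj; case: (eqVneq (a i j) 0) => [->|/Ha]; first by rewrite scale0r.
  by move/andP=> [_ ]; rewrite ltnNge Hj.
move=> i Hi; apply: big1 => j _.
case: (eqVneq (a i j) 0) => [->|/Ha]; first by rewrite scale0r.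
by move/andP=> [ ]; rewrite ltnNge Hi.
Qed.

Lemma ev_sub N a b : ev N a - ev N b = ev N (fun i j => a i j - b i j).
Proof.
rewrite /ev -sumrB; apply: eq_bigr => i _; rewrite -sumrB.
by apply: eq_bigr => j _; rewrite scalerBl.
Qed.

Lemma ev_add N a b : ev N a + ev N b = ev N (fun i j => a i j + b i j).
Proof.
rewrite /ev -big_split; apply: eq_bigr => i _; rewrite -big_split.
by apply: eq_bigr => j _; rewrite scalerDl.
Qed.

Definition delta (i0 j0 : nat) (c : R[i]) (i j : nat) : R[i] :=
  if (i == i0) && (j == j0) then c else 0.

Lemma ev_delta i0 j0 c N : (i0 < N)%N -> (j0 < N)%N ->
  ev N (delta i0 j0 c) = c *: mon i0 j0.
Proof.
move=> Hi Hj; rewrite /ev (bigD1 (Ordinal Hi)) //= (bigD1 (Ordinal Hj)) //=.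
rewrite /delta !eqxx /= big1 ?addr0; last first.
  move=> j Hne.
  have -> : (nat_of_ord j == j0) = false.
    by apply/negbTE; apply: contra Hne => /eqP Hj'; apply/eqP/val_inj.
  by rewrite scale0r.
rewrite big1 ?addr0 // => i Hne; apply: big1 => j _.
have -> : (nat_of_ord i == i0) = false.
  by apply/negbTE; apply: contra Hne => /eqP Hi'; apply/eqP/val_inj.
by rewrite scale0r.
Qed.

Definition Rep (S : nat -> nat -> bool) u := exists N (a : nat -> nat -> R[i]),
  (forall i j, a i j != 0 -> [&& S i j, (i < N)%N & (j < N)%N]) /\ u = ev N a.

Lemma Comb_rep (S : nat -> nat -> bool) u : Comb S u -> Rep S u.
Proof.
elim => [|i j c Hij|u1 v1 _ [N1 [a1 [Ha1 ->]]] _ [N2 [a2 [Ha2 ->]]]].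
- exists 0%N, (fun _ _ => 0); split; first by move=> ? ?; rewrite eqxx.
  by rewrite /ev big_ord0.
- exists (maxn i j).+1, (delta i j c); split.
    move=> i' j'; rewrite /delta; case: ifP => [/andP [/eqP -> /eqP ->] _|_]; last by rewrite eqxx.
    by rewrite Hij /=; apply/andP; split; rewrite ltnS ?leq_maxl ?leq_maxr.
  by rewrite ev_delta // ltnS ?leq_maxl ?leq_maxr.
- exists (maxn N1 N2), (fun i j => a1 i j + a2 i j); split.
    move=> i j H.
    have [H1|H2] : a1 i j != 0 \/ a2 i j != 0.
      case: (eqVneq (a1 i j) 0) => [E|]; last by left.
      by right; move: H; rewrite E add0r.
    + move/and3P: (Ha1 _ _ H1) => [-> ? ?] /=; apply/andP; split;
      apply: (leq_trans _ (leq_maxl N1 N2)) => //.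
    + move/and3P: (Ha2 _ _ H2) => [-> ? ?] /=; apply/andP; split;
      apply: (leq_trans _ (leq_maxr N1 N2)) => //.
  rewrite -ev_add (@ev_widen N1 (maxn N1 N2) a1 (leq_maxl _ _)); last first.
    by move=> i j /Ha1 /and3P [_ -> ->].
  rewrite (@ev_widen N2 (maxn N1 N2) a2 (leq_maxr _ _)) //.
  by move=> i j /Ha2 /and3P [_ -> ->].
Qed.

Lemma Comb_inter (S1 S2 : nat -> nat -> bool) u : Comb S1 u -> Comb S2 u ->
  Comb (fun i j => S1 i j && S2 i j) u.
Proof.
move=> /Comb_rep [N1 [a [Ha Eu]]] /Comb_rep [N2 [b [Hb Eu']]].
set M := maxn N1 N2.
have HaM : forall i j, a i j != 0 -> (i < M)%N && (j < M)%N.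
  move=> i j /Ha /and3P [_ ? ?]; apply/andP; split;
  apply: (leq_trans _ (leq_maxl N1 N2)) => //.
have HbM : forall i j, b i j != 0 -> (i < M)%N && (j < M)%N.
  move=> i j /Hb /and3P [_ ? ?]; apply/andP; split;
  apply: (leq_trans _ (leq_maxr N1 N2)) => //.
have EA : u = ev M a by rewrite Eu (@ev_widen N1 M a (leq_maxl N1 N2)) // => i j /Ha /and3P [_ -> ->].
have EB : u = ev M b by rewrite Eu' (@ev_widen N2 M b (leq_maxr N1 N2)) // => i j /Hb /and3P [_ -> ->].
have Eab : forall i j, a i j = b i j.
  move=> i j; apply/eqP; rewrite -subr_eq0; apply/eqP.
  case: (boolP ((i < M)%N && (j < M)%N)) => [/andP [Hi Hj]|Hn].
    apply: (@free_ev M (fun i j => a i j - b i j)) => //.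
    by rewrite -ev_sub -EA -EB subrr.
  have -> : a i j = 0 by apply/eqP; apply: contraNT Hn => /HaM.
  have -> : b i j = 0 by apply/eqP; apply: contraNT Hn => /HbM.
  by rewrite subrr.
rewrite EA /ev; apply: Comb_sum => i; apply: Comb_sum => j.
case: (eqVneq (a i j) 0) => [->|Hne]; first by rewrite scale0r; apply: Comb0.
apply: CombM; apply/andP; split; first by case/and3P: (Ha _ _ Hne).
by move: Hne; rewrite Eab => /Hb /and3P [].
Qed.

Lemma Comb_false u : Comb (fun _ _ => false) u -> u = 0.
Proof.
elim => [|i j c //|u1 v1 _ -> _ ->]; by rewrite ?addr0.
Qed.

Lemma Comb_mon_coef (S : nat -> nat -> bool) c i0 j0 : Comb S (c *: mon i0 j0) -> ~~ S i0 j0 -> c = 0.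
Proof.
move=> H HS.
have H2 : Comb (fun i j => (i == i0) && (j == j0)) (c *: mon i0 j0).
  by apply: CombM; rewrite !eqxx.
have H3 := @Comb_inter _ _ _ H H2.
have H4 : c *: mon i0 j0 = 0.
  apply: Comb_false; apply: Comb_mono H3 => i j /andP [Hs /andP [/eqP Ei /eqP Ej]].
  by move: HS; rewrite -Ei -Ej Hs.
have Hi : (i0 < (maxn i0 j0).+1)%N by rewrite ltnS leq_maxl.
have Hj : (j0 < (maxn i0 j0).+1)%N by rewrite ltnS leq_maxr.
have := @free_ev (maxn i0 j0).+1 (delta i0 j0 c).
rewrite ev_delta // => /(_ H4 i0 j0 Hi Hj).
by rewrite /delta !eqxx.
Qed.


Let t := itheta theta.

Lemma star0 : star 0 = 0.
Proof.
have h := star_add HA 0 0; rewrite addr0 in h.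
by apply: (addrI (star 0)); rewrite addr0 -h.
Qed.

Lemma star1 : star 1 = 1.
Proof.
have h := star_mul HA (star 1) 1.
by rewrite mulr1 (star_invol HA) mulr1 in h.
Qed.

Lemma starX (z : A) n : star z = z -> star (z ^+ n) = z ^+ n.
Proof.
move=> hz; elim: n => [|n IH]; first by rewrite !expr0 star1.
by rewrite exprS (star_mul HA) IH hz -exprSr exprS.
Qed.

Lemma yx : y * x = x * y + t%:A.
Proof.
have h := commutator_xy HA.
have -> : y * x = x * y - (x * y - y * x) by rewrite opprB addrC subrK.
by rewrite h scaleNr opprK.
Qed.

Lemma yXSx b : y ^+ b.+1 * x = x * y ^+ b.+1 + (b.+1%:R * t) *: y ^+ b.
Proof.
elim: b => [|b IH].
  by rewrite expr1 yx expr0 mul1r.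
rewrite exprS -mulrA IH mulrDr mulrA yx mulrDl mulr_algl -scalerAr -exprS.
rewrite -exprS -mulrA -exprS -addrA -scalerDl; congr (_ + _ *: _).
by rewrite [in RHS]mulrSr mulrDl mul1r addrC.
Qed.

Lemma yXx b : y ^+ b * x = x * y ^+ b + (b%:R * t) *: y ^+ b.-1.
Proof.
case: b => [|b]; last exact: yXSx.
by rewrite expr0 mul1r mulr1 mul0r scale0r addr0.
Qed.


Lemma monx i j : mon i j * x = mon i.+1 j + (j%:R * t) *: mon i j.-1.
Proof. by rewrite /mon -mulrA yXx mulrDr mulrA -exprSr -scalerAr. Qed.

Lemma Comb_rx c b r : Comb (fun i j => (i < c) && (j < b))%N r ->
  Comb (fun i j => (i < c.+1) && (j < b))%N (r * x).
Proof.
apply: (@Comb_map _ _ (fun z => z * x)); first by rewrite mul0r.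
  by move=> u v; rewrite mulrDl.
move=> i j k /andP [Hi Hj]; rewrite -scalerAl monx scalerDr scalerA.
apply: CombD; apply: CombM; apply/andP; split => //.
- by apply: leq_trans Hi _.
- by apply: leq_ltn_trans (leq_pred j) Hj.
Qed.

Lemma NO b c : Comb (fun i j => (i < c) && (j < b))%N (y ^+ b * x ^+ c - x ^+ c * y ^+ b).
Proof.
elim: c => [|c IH].
  by rewrite !expr0 mulr1 mul1r subrr; apply: Comb0.
have E : y ^+ b * x ^+ c.+1 - x ^+ c.+1 * y ^+ b =
   x ^+ c * ((b%:R * t) *: y ^+ b.-1) + (y ^+ b * x ^+ c - x ^+ c * y ^+ b) * x.
  rewrite mulrBl -[x ^+ c * y ^+ b * x]mulrA yXx mulrDr mulrA -exprSr.
  rewrite -[y ^+ b * x ^+ c * x]mulrA -exprSr.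
  set a1 := y ^+ b * _; set b1 := x ^+ c.+1 * _; set d1 := x ^+ c * _.
  by rewrite opprD addrCA [d1 + _]addrCA subrr addr0.
rewrite E; apply: CombD; last exact: Comb_rx.
case: b {IH E} => [|b]; first by rewrite mul0r scale0r mulr0; apply: Comb0.
rewrite -scalerAr; apply: CombM => /=; apply/andP; split => //.
Qed.

Lemma mon_mul a b c d : Comb (fun i j => (i < a + c) && (j < b + d))%N
   (mon a b * mon c d - mon (a + c) (b + d)).
Proof.
have -> : mon a b * mon c d - mon (a + c) (b + d) =
    x ^+ a * (y ^+ b * x ^+ c - x ^+ c * y ^+ b) * y ^+ d.
  by rewrite /mon !exprD mulrBr mulrBl !mulrA.
apply: (@Comb_map _ _ (fun z => x ^+ a * z * y ^+ d)) (NO b c).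
- by rewrite mulr0 mul0r.
- by move=> u v; rewrite mulrDr mulrDl.
move=> i j k /andP [Hi Hj].
rewrite -scalerAr -scalerAl /mon mulrA -exprD -mulrA -exprD.
by apply: CombM; apply/andP; split; rewrite ?ltn_add2l ?ltn_add2r.
Qed.

Lemma star_mon i j : Comb (fun i' j' => (i' < i) && (j' < j))%N
  (star (mon i j) - mon i j).
Proof.
by rewrite /mon (star_mul HA) !starX ?(star_x HA) ?(star_y HA) //; apply: NO.
Qed.


Definition ltlex (i j P Q : nat) : bool := (i < P)%N || ((i == P) && (j < Q)%N).
Definition lelex (i j P Q : nat) : bool := (i < P)%N || ((i == P) && (j <= Q)%N).
Definition Below P Q := Comb (fun i j => ltlex i j P Q).
Definition Upto P Q := Comb (fun i j => lelex i j P Q).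

Lemma Comb_mul (S1 S2 S : nat -> nat -> bool) u v : Comb S1 u -> Comb S2 v ->
  (forall i j k l, S1 i j -> S2 k l -> S (i + k) (j + l)) ->
  (forall i j k l i' j', S1 i j -> S2 k l -> (i' < i + k)%N -> (j' < j + l)%N -> S i' j') ->
  Comb S (u * v).
Proof.
move=> Hu Hv H1 H2.
apply: (@Comb_map _ _ (fun z => z * v)) Hu; first by rewrite mul0r.
  by move=> a b; rewrite mulrDl.
move=> i j c Hij.
apply: (@Comb_map _ _ (fun z => c *: mon i j * z)) Hv; first by rewrite mulr0.
  by move=> a b; rewrite mulrDr.
move=> k l c2 Hkl.
rewrite -scalerAl -scalerAr scalerA.
rewrite -[mon i j * mon k l](subrK (mon (i + k) (j + l))) scalerDr.
apply: CombD; last by apply: CombM; apply: H1.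
apply: Comb_scale; apply: Comb_mono (mon_mul i j k l) => i' j' /andP [? ?].
exact: (H2 i j k l).
Qed.

Lemma lead P Q u : Upto P Q u -> exists c, Below P Q (u - c *: mon P Q).
Proof.
elim => [|i j c Hij|u1 v1 _ [c1 H1] _ [c2 H2]].
- by exists 0; rewrite scale0r subrr; apply: Comb0.
- case: (boolP ((i == P) && (j == Q))) => [/andP [/eqP -> /eqP ->]|Hn].
    by exists c; rewrite subrr; apply: Comb0.
  exists 0; rewrite scale0r subr0; apply: CombM.
  move: Hij Hn; rewrite /lelex /ltlex => *; lia.
- exists (c1 + c2); rewrite scalerDl opprD addrACA; exact: CombD.
Qed.

Lemma Below_Upto P Q u : Below P Q u -> Upto P Q u.
Proof. by apply: Comb_mono => i j; rewrite /lelex /ltlex => *; lia. Qed.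

Lemma Upto_of P Q u a : Below P Q (u - a *: mon P Q) -> Upto P Q u.
Proof.
move=> H; rewrite -(subrK (a *: mon P Q) u); apply: CombD; first exact: (@Below_Upto P Q).
by apply: CombM; rewrite /lelex eqxx leqnn orbT.
Qed.

Lemma lead_mul P Q P' Q' u v a b :
  Below P Q (u - a *: mon P Q) -> Below P' Q' (v - b *: mon P' Q') ->
  Below (P + P') (Q + Q') (u * v - (a * b) *: mon (P + P') (Q + Q')).
Proof.
move=> Hu Hv.
have Uv := @Upto_of _ _ _ _ Hv.
move: Hu Hv Uv; set u' := u - _; set v' := v - _ => Hu Hv Uv.
have Eu : u = u' + a *: mon P Q by rewrite subrK.
have Ev : v = v' + b *: mon P' Q' by rewrite subrK.
have E : u * v - (a * b) *: mon (P + P') (Q + Q') =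
   u' * v + (a *: mon P Q * v' +
   (a * b) *: (mon P Q * mon P' Q' - mon (P + P') (Q + Q'))).
  rewrite {1}Eu mulrDl {2}Ev mulrDr -!addrA; congr (_ + (_ + _)).
  by rewrite scalerBr -scalerAl -scalerAr scalerA.
rewrite E; apply: CombD; last apply: CombD.
- apply: (@Comb_mul _ _ _ _ _ Hu Uv); rewrite /lelex /ltlex => *; lia.
- have Ha : Upto P Q (a *: mon P Q) by apply: CombM; rewrite /lelex eqxx leqnn orbT.
  apply: (@Comb_mul _ _ _ _ _ Ha Hv); rewrite /lelex /ltlex => *; lia.
- apply: Comb_scale; apply: Comb_mono (mon_mul P Q P' Q').
  move=> i j; rewrite /ltlex => *; lia.
Qed.

Lemma star_add0 : forall a b, star (a + b) = star a + star b.
Proof. exact: (star_add HA). Qed.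

Lemma star_Below P Q u : Below P Q u -> Below P Q (star u).
Proof.
apply: (@Comb_map _ _ star _ star0 star_add0) => i j c Hij.
rewrite (star_scale HA) -(subrK (mon i j) (star (mon i j))) scalerDr.
apply: CombD; last by apply: CombM.
apply: Comb_scale; apply: Comb_mono (star_mon i j).
by move=> i' j'; move: Hij; rewrite /ltlex => *; lia.
Qed.

Lemma lead_star P Q u a : Below P Q (u - a *: mon P Q) ->
  Below P Q (star u - a^* *: mon P Q).
Proof.
move=> H.
have E : star u = star (u - a *: mon P Q) + a^* *: star (mon P Q).
  by rewrite -(star_scale HA) -star_add0 subrK.
rewrite E -addrA -scalerBr; apply: CombD; first exact: star_Below.
apply: Comb_scale; apply: Comb_mono (star_mon P Q).
by move=> i' j'; rewrite /ltlex => *; lia.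
Qed.


Lemma row_step n (u : 'I_n -> A) (i0 : 'I_n) P Q :
  \sum_k u k * star (u k) = u i0 -> (P != 0%N) || (Q != 0%N) ->
  (forall k, Upto P Q (u k)) -> forall k, Below P Q (u k).
Proof.
move=> Hsum HPQ HU.
have [a Ha] : exists a : 'I_n -> R[i], forall k, Below P Q (u k - a k *: mon P Q).
  apply: (@fin_all_exists _ (fun _ => R[i]) (fun k c => Below P Q (u k - c *: mon P Q))) => k; exact: (@lead P Q (u k) (HU k)).
have Hk k : Below (P + P) (Q + Q)
    (u k * star (u k) - (a k * (a k)^*) *: mon (P + P) (Q + Q)).
  exact: (@lead_mul P Q P Q (u k) (star (u k)) (a k) (a k)^* (Ha k) (@lead_star P Q (u k) (a k) (Ha k))).
set m := mon (P + P) (Q + Q).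
have Hs : Below (P + P) (Q + Q) (u i0 - (\sum_k a k * (a k)^*) *: m).
  rewrite -Hsum scaler_suml -sumrB; exact: Comb_sum.
have Hu0 : Below (P + P) (Q + Q) (u i0).
  apply: Comb_mono (HU i0) => i j; move: HPQ; rewrite /lelex /ltlex => *; lia.
set s := \sum_k _ in Hs.
have H3 : Below (P + P) (Q + Q) (s *: m).
  have -> : s *: m = u i0 - (u i0 - s *: m) by rewrite opprB addrC subrK.
  exact: Comb_sub.
have s0 : s = 0.
  apply: (@Comb_mon_coef _ s (P + P) (Q + Q) H3); by rewrite /ltlex ltnn eqxx ltnn.
have Hpos k : 0 <= a k * (a k)^* by rewrite -normCK exprn_ge0.
move: s0; rewrite /s => /eqP; rewrite psumr_eq0; last by move=> k _; exact: Hpos.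
move=> /allP Hall k.
have : a k * (a k)^* == 0 by apply: (implyP (Hall k (mem_index_enum k))).
rewrite -normCK sqrf_eq0 normr_eq0 => /eqP Hk0.
by move: (Ha k); rewrite Hk0 scale0r subr0.
Qed.

Definition UB N P Q := Comb (fun i j => (j < N)%N && lelex i j P Q).

Lemma row_all n (u : 'I_n -> A) (i0 : 'I_n) N :
  \sum_k u k * star (u k) = u i0 ->
  forall P Q, (forall k, UB N P Q (u k)) -> forall k, UB N 0 0 (u k).
Proof.
move=> Hsum.
have dec P Q : (P != 0%N) || (Q != 0%N) -> (forall k, UB N P Q (u k)) ->
    forall k, Comb (fun i j => (j < N)%N && ltlex i j P Q) (u k).
  move=> HPQ H k.
  have HU : forall k, Upto P Q (u k).
    by move=> k'; apply: Comb_mono (H k') => i j /andP [].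
  have HB := @row_step n u i0 P Q Hsum HPQ HU k.
  have HI := @Comb_inter _ _ _ (H k) HB.
  by apply: Comb_mono HI => i j /andP [/andP [-> _] ->].
have mono P Q P' Q' : (forall i j, (j < N)%N -> ltlex i j P Q -> lelex i j P' Q') ->
    (P != 0%N) || (Q != 0%N) -> (forall k, UB N P Q (u k)) -> forall k, UB N P' Q' (u k).
  move=> Himp HPQ H k; apply: Comb_mono (dec _ _ HPQ H k) => i j /andP [Hj Hl].
  by rewrite Hj Himp.
have L1 Q i j : (j < N)%N -> ltlex i j 0 Q.+1 -> lelex i j 0 Q.
  by rewrite /lelex /ltlex => *; lia.
have L2 P i j : (j < N)%N -> ltlex i j P.+1 0 -> lelex i j P N.-1.
  by rewrite /lelex /ltlex => *; lia.
have L3 P Q i j : (j < N)%N -> ltlex i j P.+1 Q.+1 -> lelex i j P.+1 Q.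
  by rewrite /lelex /ltlex => *; lia.
elim => [|P IHP] Q.
  elim: Q => [|Q IHQ] H; first by [].
  exact: (IHQ (mono 0%N Q.+1 0%N Q (L1 Q) isT H)).
elim: Q => [|Q IHQ] H.
  exact: (IHP N.-1 (mono P.+1 0%N P N.-1 (L2 P) isT H)).
exact: (IHQ (mono P.+1 Q.+1 P.+1 Q (L3 P Q) isT H)).
Qed.

Lemma UB00 N z : UB N 0 0 z -> exists c, z = c%:A.
Proof.
elim => [|i j c Hij|u1 v1 _ [c1 ->] _ [c2 ->]].
- by exists 0; rewrite scale0r.
- have [-> ->] : i = 0%N /\ j = 0%N by move: Hij; rewrite /lelex => *; lia.
  by exists c; rewrite /mon !expr0 mulr1.
- by exists (c1 + c2); rewrite scalerDl.
Qed.

Lemma UB_init z : exists N, forall P, (N <= P)%N -> UB N P 0 z.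
Proof.
have [N [a ->]] := monomials_span HA z.
exists N => P HP; apply: Comb_sum => p; apply: Comb_sum => q.
apply: CombM; have := ltn_ord p; have := ltn_ord q.
by rewrite /lelex => *; lia.
Qed.

Lemma star_alg (c : R[i]) : star (c%:A) = c^*%:A.
Proof. by rewrite (star_scale HA) star1. Qed.

Lemma alg_inj (c d : R[i]) : c%:A = d%:A :> A -> c = d.
Proof.
move=> /eqP; rewrite -subr_eq0 -scalerBl scaler_eq0 oner_eq0 orbF subr_eq0.
by move/eqP.
Qed.

End Weyl.

Theorem theorem2p3 (R : realType) (theta : R) (A : algType R[i])
    (star : A -> A) (x y : A) :
  0 <= theta -> Atheta star x y theta ->
  forall (n : nat) (p : 'M[A]_n),
    p *m p = p -> mx_star star p = p ->
    exists q : 'M[R[i]]_n,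
      p = map_mx (fun c : R[i] => c%:A) q /\
      q *m q = q /\ mx_star (fun c : R[i] => c^*) q = q.
Proof.
move=> _ HA n p Hpp Hps.
have Hst : forall i k, star (p i k) = p k i.
  by move=> i k; have := congr1 (fun M : 'M[A]_n => M k i) Hps; rewrite /mx_star mxE.
have Hrow : forall i0 k, exists c : R[i], p i0 k = c%:A.
  move=> i0.
  have Hsum : \sum_k p i0 k * star (p i0 k) = p i0 i0.
    have := congr1 (fun M : 'M[A]_n => M i0 i0) Hpp; rewrite mxE => <-.
    by apply: eq_bigr => k _; rewrite Hst.
  have [N HN] : exists N : 'I_n -> nat, forall k P, (N k <= P)%N ->
      UB R A x y (N k) P 0 (p i0 k).
    apply: (@fin_all_exists _ (fun _ => nat)
      (fun k N => forall P, (N <= P)%N -> UB R A x y N P 0 (p i0 k))) => k.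
    exact: (@UB_init R A star x y theta HA (p i0 k)).
  set M := \max_k N k.
  have HM : forall k, UB R A x y M M 0 (p i0 k).
    move=> k; have Hk := leq_bigmax k (F := N).
    apply: (@Comb_mono R A x y _ _ _ _ (HN k M Hk)) => i j /andP [Hj Hl].
    by rewrite Hl andbT; apply: leq_trans Hj Hk.
  move=> k; apply: (@UB00 R A x y M).
  exact: (@row_all R A star x y theta HA n (fun k => p i0 k) i0 M Hsum M 0%N HM k).
have [q Hq] : exists q : 'I_n -> 'I_n -> R[i], forall i k, p i k = (q i k)%:A.
  apply: (@fin_all_exists _ (fun _ => 'I_n -> R[i])
     (fun i f => forall k, p i k = (f k)%:A)) => i.
  exact: (@fin_all_exists _ (fun _ => R[i]) (fun k c => p i k = c%:A)).
exists (\matrix_(i, k) q i k).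
have Hmap : p = map_mx (fun c : R[i] => c%:A) (\matrix_(i, k) q i k).
  by apply/matrixP => i k; rewrite !mxE Hq.
split; first exact: Hmap.
split.
  apply/matrixP => i k; rewrite !mxE; apply: (@alg_inj R A).
  rewrite -Hq -Hpp mxE scaler_suml; apply: eq_bigr => j _.
  by rewrite !mxE !Hq mulr_algl scalerA.
apply/matrixP => i k; rewrite !mxE; apply: (@alg_inj R A).
by rewrite -(@star_alg R A star x y theta HA) -Hq Hst Hq.
Qed.
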